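(* Let $\Psi=\{\psi_i\}_{i\in I}$ be an exact lower frame sequence in a separable Hilbert space $\mathcal{H}$. Then $\Psi$ has a unique biorthogonal sequence, and $\Psi$ is minimal.
   Context: $I$ is countable. $\Psi$ is a lower frame sequence if there is $A>0$ with $A\|f\|^2\le\sum_i|\langle f,\psi_i\rangle|^2$ for all $f\in\mathcal{H}$ with $\{\langle f,\psi_i\rangle\}_i\in\ell^2$. $\Psi$ is exact if for every $k\in I$, $\overline{\mathrm{span}}\{\psi_i\}_{i\in I}\ne\overline{\mathrm{span}}\{\psi_i\}_{i\ne k}$. $\Psi$ is minimal if $\psi_j\notin\overline{\mathrm{span}}\{\psi_i\}_{i\ne j}$ for all $j$. A sequence $\{\varphi_i\}_{i\in I}$ is biorthogonal to $\Psi$ if $\langle\psi_i,\varphi_j\rangle=\delta_{ij}$ for all $i,j$. *)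

(* Defs.v *)
From HB Require Import structures.
From mathcomp Require Import all_boot all_order all_algebra.
From mathcomp Require Import all_classical all_reals all_analysis.
From mathcomp Require Import complex.
Set Implicit Arguments. Unset Strict Implicit. Unset Printing Implicit Defensive.
Import Order.TTheory GRing.Theory Num.Theory.
Import numFieldNormedType.Exports.
Local Open Scope classical_set_scope.
Local Open Scope ring_scope.

Section HilbertDefs.
Variable R : realType.
Local Notation C := (R[i]).

Definition cabs2 (z : C) : R := (complex.Re z) ^+ 2 + (complex.Im z) ^+ 2.

Definition rnorm (H : normedModType C) (x : H) : R := complex.Re `|x|.

(** [ip] is an inner product on H (linear in the first argument,
    conjugate symmetric) inducing the norm of H: <x,x> = ||x||^2.
    Together with completeness of H this makes H a complex Hilbert space. *)
Record is_inner_product (H : normedModType C) (ip : H -> H -> C) : Prop := {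
  ip_linear : forall (a : C) (x y z : H), ip (a *: x + y) z = a * ip x z + ip y z;
  ip_conj_sym : forall x y : H, ip x y = (ip y x)^*;
  ip_norm : forall x : H, ip x x = `|x| ^+ 2 }.

Definition separable (T : topologicalType) : Prop :=
  exists D : set T, countable D /\ closure D = [set: T].

Definition span_of (H : normedModType C) (I : countType) (psi : I -> H)
    (J : set I) : set H :=
  [set x | exists (s : seq I) (c : I -> C),
      (forall i, i \in s -> J i) /\ x = \sum_(i <- s) c i *: psi i].

Definition cspan (H : normedModType C) (I : countType) (psi : I -> H)
    (J : set I) : set H := closure (span_of psi J).

Definition lower_frame_sequence (H : normedModType C) (ip : H -> H -> C)
    (I : countType) (psi : I -> H) : Prop :=
  exists A : R, 0 < A /\
    forall f : H,
      (\esum_(i in [set: I]) ((cabs2 (ip f (psi i)))%:E) < +oo)%E ->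
      ((A * rnorm f ^+ 2)%:E <= \esum_(i in [set: I]) ((cabs2 (ip f (psi i)))%:E))%E.

Definition exact_seq (H : normedModType C) (I : countType) (psi : I -> H) : Prop :=
  forall k : I, cspan psi [set: I] <> cspan psi [set i | i <> k].

Definition minimal_seq (H : normedModType C) (I : countType) (psi : I -> H) : Prop :=
  forall j : I, ~ cspan psi [set i | i <> j] (psi j).

Definition biorthogonal (H : normedModType C) (ip : H -> H -> C)
    (I : countType) (psi phi : I -> H) : Prop :=
  forall i j : I, ip (psi i) (phi j) = (i == j)%:R.

End HilbertDefs.

(* Main.v *)
Require Import Defs.
From HB Require Import structures.
From mathcomp Require Import all_boot all_order all_algebra.
From mathcomp Require Import all_classical all_reals all_analysis.
From mathcomp Require Import complex.
Import Order.TTheory GRing.Theory Num.Theory.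
Import numFieldNormedType.Exports.
Local Open Scope classical_set_scope.
Local Open Scope complex_scope.
Local Open Scope ring_scope.
From mathcomp Require Import ring lra.
Section S.
Variables (R : realType) (H : completeNormedModType R[i]) (ip : H -> H -> R[i]).
Hypothesis hip : is_inner_product ip.
Local Notation C := R[i].
Lemma ip0l z : ip 0 z = 0.
Proof. have := ip_linear hip 1 0 0 z. rewrite scaler0 addr0 mul1r => h. by apply: (@addrI _ (ip 0 z)); rewrite addr0 -h. Qed.
Lemma ipDl x y z : ip (x + y) z = ip x z + ip y z.
Proof. have := ip_linear hip 1 x y z. by rewrite scale1r mul1r. Qed.
Lemma ipZl a x z : ip (a *: x) z = a * ip x z.
Proof. have := ip_linear hip a x 0 z. by rewrite addr0 ip0l addr0. Qed.
Lemma ipNl x z : ip (- x) z = - ip x z.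
Proof. by rewrite -scaleN1r ipZl mulN1r. Qed.
Lemma ipBl x y z : ip (x - y) z = ip x z - ip y z.
Proof. by rewrite ipDl ipNl. Qed.
Lemma ipZr a x z : ip z (a *: x) = a^* * ip z x.
Proof. by rewrite (ip_conj_sym hip) ipZl rmorphM /= -(ip_conj_sym hip). Qed.
Lemma ipDr x y z : ip z (x + y) = ip z x + ip z y.
Proof. by rewrite (ip_conj_sym hip) ipDl rmorphD /= -!(ip_conj_sym hip). Qed.
Lemma ipBr x y z : ip z (x - y) = ip z x - ip z y.
Proof. by rewrite (ip_conj_sym hip) ipBl rmorphB /= -!(ip_conj_sym hip). Qed.

Lemma ge0_realC (z : C) : 0 <= z -> z = (complex.Re z)%:C.
Proof. case: z => a b; rewrite lecE /= => /andP [/eqP -> _]. by []. Qed.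
Lemma normE (x : H) : `|x| = (rnorm x)%:C.
Proof. exact: ge0_realC. Qed.
Lemma rnorm_ge0 (x : H) : 0 <= rnorm x.
Proof. by rewrite -lecR rmorph0 -normE. Qed.
Lemma rnormD (x y : H) : rnorm (x + y) <= rnorm x + rnorm y.
Proof. by rewrite -lecR rmorphD /= -!normE ler_normD. Qed.
Lemma rnormB (x y : H) : rnorm (x - y) = rnorm (y - x).
Proof. by rewrite /rnorm distrC. Qed.
Lemma rnormZ (a : C) (x : H) : rnorm (a *: x) = complex.Re `|a| * rnorm x.
Proof. apply: complexI. by rewrite rmorphM /= -normE -ge0_realC // normrZ. Qed.
Lemma rnorm_eq0 (x : H) : rnorm x = 0 -> x = 0.
Proof. move=> h; apply/normr0_eq0. by rewrite normE h. Qed.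
Lemma ip_rnorm (x : H) : ip x x = (rnorm x ^+ 2)%:C.
Proof. by rewrite (ip_norm hip) normE rmorphXn. Qed.
Section Span.
Variables (I : countType) (psi : I -> H).
Implicit Types (J : set I).

Lemma span0 J : span_of psi J 0.
Proof. exists [::], (fun _ => 0); split => //; by rewrite big_nil. Qed.

Lemma spanZ J a x : span_of psi J x -> span_of psi J (a *: x).
Proof.
move=> [s [c [hs ->]]]; exists s, (fun i => a * c i); split => //.
by rewrite scaler_sumr; apply: eq_bigr => i _; rewrite scalerA.
Qed.

Lemma span_add1 J x a b : span_of psi J x -> J a -> span_of psi J (x + b *: psi a).
Proof.
move=> [s [c [hs ->]]] Ja.
exists (a :: [seq i <- s | i != a]),
  (fun i => if i == a then c a *+ count_mem a s + b else c i); split.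
  move=> i; rewrite inE mem_filter => /orP [/eqP -> //| /andP [_ /hs] //].
rewrite big_cons eqxx big_filter.
rewrite (bigID (fun i => i == a)) /=.
have -> : \sum_(i <- s | i == a) c i *: psi i = (c a *: psi a) *+ count_mem a s.
  rewrite (eq_bigr (fun _ => c a *: psi a)); last by move=> i /eqP ->.
  by rewrite big_const_seq iter_addr addr0.
rewrite [X in _ = _ + X](eq_bigr (fun i => c i *: psi i)); last first.
  by move=> i /negbTE ->.
by rewrite scalerDl scalerMnl addrAC.
Qed.

Lemma spanD J x y : span_of psi J x -> span_of psi J y -> span_of psi J (x + y).
Proof.
move=> hx [s [c [hs ->]]]; elim: s hs x hx => [|a s IH] hs x hx.
  by rewrite big_nil addr0.
rewrite big_cons addrA; apply: IH.
  by move=> i hi; apply: hs; rewrite inE hi orbT.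
by apply: span_add1 => //; apply: hs; rewrite inE eqxx.
Qed.

Lemma span_psi J a : J a -> span_of psi J (psi a).
Proof. by move=> Ja; rewrite -[psi a]add0r -[psi a]scale1r; apply: span_add1 => //; apply: span0. Qed.

Lemma spanS J J' x : J `<=` J' -> span_of psi J x -> span_of psi J' x.
Proof. move=> hJ [s [c [hs ->]]]; exists s, c; split => // i /hs; exact: hJ. Qed.

Lemma span_split (j : I) x : span_of psi setT x ->
  exists a v, span_of psi [set i | i <> j] v /\ x = a *: psi j + v.
Proof.
move=> [s [c [_ ->]]]; elim: s => [|i s [a [v [hv e]]]].
  by exists 0, 0; split; [apply: span0 | rewrite big_nil scale0r addr0].
rewrite big_cons e; have [->|nij] := eqVneq i j.
  by exists (c j + a), v; split => //; rewrite scalerDl addrA.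
exists a, (c i *: psi i + v); split; last by rewrite addrCA.
apply: spanD => //; apply: spanZ; apply: span_psi => /= /eqP; by rewrite (negbTE nij).
Qed.
End Span.
Definition appr (M : set H) (w : H) :=
  forall e : R, 0 < e -> exists2 x, M x & rnorm (w - x) < e.

Lemma ballE (w y : H) (e : R) : ball w e%:C y <-> rnorm (w - y) < e.
Proof. by rewrite -ball_normE /ball_ /= normE ltcR. Qed.

Lemma closure_appr (M : set H) w : closure M w <-> appr M w.
Proof.
split.
  move=> hc e e0; have e0' : 0 < e%:C by rewrite ltcR.
  have [x [Mx /ballE hx]] := hc _ (nbhsx_ballx w _ e0').
  by exists x.
move=> ha B /nbhs_ballP [e /= e0 hB].
have ee : e = (complex.Re e)%:C by apply: ge0_realC; apply: ltW.
have e0' : 0 < complex.Re e by rewrite -ltcR -ee.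
have [x Mx hx] := ha _ e0'.
exists x; split => //; apply: hB; rewrite ee; exact/ballE.
Qed.

Lemma appr_sub (M : set H) x : M x -> appr M x.
Proof. by move=> Mx e e0; exists x => //; rewrite subrr /rnorm normr0. Qed.

Lemma appr_trans (M : set H) w : appr (appr M) w -> appr M w.
Proof.
move=> h e e0; have e2 : 0 < e / 2 by rewrite divr_gt0.
have [x hx h1] := h _ e2; have [y My h2] := hx _ e2.
exists y => //; have := rnormD (w - x) (x - y).
rewrite addrA subrK => h3; lra.
Qed.

Lemma appr_comb (I : countType) (psi : I -> H) J a w v :
  appr (span_of psi J) w -> span_of psi J v -> appr (span_of psi J) (a *: w + v).
Proof.
move=> hw hv e e0; set k := complex.Re `|a| + 1.
have k0 : 0 < k by rewrite /k ltr_pwDr // -lecR rmorph0 -ge0_realC.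
have ek : 0 < e / k by rewrite divr_gt0.
have [x Mx hx] := hw _ ek.
exists (a *: x + v); first by apply: spanD => //; apply: spanZ.
have -> : a *: w + v - (a *: x + v) = a *: (w - x).
  by rewrite opprD addrACA subrr addr0 scalerBr.
rewrite rnormZ; have := rnorm_ge0 (w - x); have : 0 <= complex.Re `|a|.
  by rewrite -lecR rmorph0 -ge0_realC.
move: hx; rewrite ltr_pdivlMr // => hx h1 h2.
rewrite /k in hx; nra.
Qed.
Definition einv (n : nat) : R := n.+1%:R^-1.
Lemma einv_gt0 n : 0 < einv n.
Proof. by rewrite /einv invr_gt0 ltr0n. Qed.
Lemma einv_le1 n : einv n <= 1.
Proof. by rewrite /einv invf_le1 ?ltr0n // ler1n. Qed.
Lemma einv_mono n k : (n <= k)%N -> einv k <= einv n.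
Proof. by move=> hnk; rewrite /einv lef_pV2 ?posrE ?ltr0n // ler_nat ltnS. Qed.
Lemma einv_small (e : R) : 0 < e -> exists N, forall n, (N <= n)%N -> einv n < e.
Proof.
move=> e0; exists (Num.Def.archi_bound e^-1) => n hn.
have ei : 0 <= e^-1 by rewrite invr_ge0 ltW.
have h := archi_boundP ei.
rewrite /einv invf_plt ?posrE ?ltr0n //.
apply: (lt_le_trans h); rewrite ler_nat; exact: (leq_trans hn).
Qed.

Lemma par (a b : H) : rnorm (a + b) ^+ 2 + rnorm (a - b) ^+ 2 = 2 * rnorm a ^+ 2 + 2 * rnorm b ^+ 2.
Proof.
have : ip (a + b) (a + b) + ip (a - b) (a - b) = 2 * ip a a + 2 * ip b b.
  rewrite !ipBl !ipBr !ipDl !ipDr; ring.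
by rewrite !ip_rnorm -(rmorph_nat (real_complex R) 2) -!rmorphM -!rmorphD => /complexI.
Qed.

Lemma rnorm2Z (y : H) : rnorm (2 *: y) = 2 * rnorm y.
Proof. by rewrite rnormZ normr_nat -(rmorph_nat (real_complex R)). Qed.

Lemma variational (f u : H) : (forall t : C, rnorm f <= rnorm (f - t *: u)) -> ip f u = 0.
Proof.
  move=> hu.
  have q0 : 0 <= rnorm u ^+ 2 by rewrite sqr_ge0.
  have q1 : 0 < rnorm u ^+ 2 + 1 by lra.
  pose s := (rnorm u ^+ 2 + 1)^-1.
  have s0 : 0 < s by rewrite /s invr_gt0.
  have sq : s * rnorm u ^+ 2 = 1 - s by rewrite /s; field; lra.
  pose z := ip f u.
  pose t := s%:C * z.
  have h := hu t.
  have h2 : rnorm f ^+ 2 <= rnorm (f - t *: u) ^+ 2 by have := rnorm_ge0 f; nra.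
  pose g := complex.Re `|z|.
  have gz : (g ^+ 2)%:C = z * conjc z.
    have nz : `|z| = g%:C by apply: ge0_realC.
    by rewrite -sqr_normc nz rmorphXn.
  have ct : Num.conj t = s%:C * conjc z by rewrite /t rmorphM; congr (_ * _); exact: conjc_real.
  have ipuf : ip u f = conjc z by rewrite (ip_conj_sym hip).
  have ex : ip (f - t *: u) (f - t *: u) = (rnorm f ^+ 2)%:C - 2%:R%:C * s%:C * (g ^+ 2)%:C
       + s%:C ^+ 2 * (g ^+ 2)%:C * (rnorm u ^+ 2)%:C.
    rewrite gz !ipBl !ipBr !ipZl !ipZr ct ipuf !ip_rnorm /t -/z rmorph_nat; ring.
  have ex' : rnorm (f - t *: u) ^+ 2 = rnorm f ^+ 2 - 2 * s * g ^+ 2 + s ^+ 2 * g ^+ 2 * rnorm u ^+ 2.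
    apply: complexI; rewrite -ip_rnorm ex.
    by rewrite -!rmorphXn -!rmorphM -!rmorphB -!rmorphD.
  rewrite ex' in h2.
  have g2 : g ^+ 2 = 0.
    have := sqr_ge0 g; move: (g ^+ 2) h2 => G h2 G0.
    have e3 : s ^+ 2 * G * rnorm u ^+ 2 = s * G * (1 - s) by rewrite -sq; ring.
    rewrite e3 in h2; nra.
  have nz : `|z| = g%:C by apply: ge0_realC.
  have g0 : g = 0 by apply/eqP; rewrite -sqrf_eq0 g2.
  by apply/normr0_eq0; rewrite nz g0.
Qed.

Section Proj.
Variables (I : countType) (psi : I -> H) (j : I).
Let M := span_of psi [set i | i <> j].
Let p := psi j.

Lemma proj : ~ appr M p -> exists f, (forall i, i <> j -> ip f (psi i) = 0) /\ ip p f <> 0.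
Proof.
move=> hp.
pose E := [set r | exists2 x, M x & r = rnorm (p - x)].
have E0 : E !=set0 by exists (rnorm (p - 0)), 0 => //; apply: span0.
have Elb : has_lbound E by exists 0 => r [x _ ->]; apply: rnorm_ge0.
pose D := inf E.
have LB x : M x -> D <= rnorm (p - x) by move=> Mx; apply: (ge_inf Elb); exists x.
have D0 : 0 <= D by apply: (lb_le_inf E0) => r [x _ ->]; apply: rnorm_ge0.
have hseq n : exists x, M x /\ rnorm (p - x) < D + einv n.
  have [r [x Mx ->] h] := inf_adherent (einv_gt0 n) (conj E0 Elb).
  by exists x.
have [m hm] := choice hseq.
have cau n k : rnorm (m n - m k) ^+ 2 <= 2 * (2 * D + 1) * (einv n + einv k).
  pose mid := 2^-1 *: (m n + m k).
  have Mmid : M mid by apply: spanZ; apply: spanD; [exact: (hm n).1 | exact: (hm k).1].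
  have hmid := LB _ Mmid.
  have e2 : (p - m n) + (p - m k) = 2 *: (p - mid).
    rewrite scalerBr /mid scalerA divff ?pnatr_eq0 // scale1r scaler_nat mulr2n.
    by rewrite opprD addrACA.
  have := par (p - m n) (p - m k); rewrite e2 rnorm2Z.
  have -> : p - m n - (p - m k) = m k - m n by rewrite opprB addrC addrA subrK.
  rewrite [rnorm (m k - m n)]rnormB.
  have h1 := LB _ (hm n).1; have h2 := LB _ (hm k).1.
  have h3 := (hm n).2; have h4 := (hm k).2.
  have := einv_le1 n; have := einv_le1 k; have := einv_gt0 n; have := einv_gt0 k.
  move: (rnorm (p - m n)) (rnorm (p - m k)) (rnorm (p - mid)) (rnorm (m n - m k)) (einv n) (einv k) h1 h2 h3 h4 hmid.
  move=> an ak r d en ek h1 h2 h3 h4 hr ek0 en0 ek1 en1 hpar.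
  have hn : an ^+ 2 <= D ^+ 2 + (2 * D + 1) * en by nra.
  have hk : ak ^+ 2 <= D ^+ 2 + (2 * D + 1) * ek by nra.
  have hrr : D ^+ 2 <= r ^+ 2 by nra.
  nra.
have cauex : cauchy_ex (m @ \oo).
  move=> eps eps0.
  have ee := @ge0_realC eps (ltW eps0); set ep := complex.Re eps in ee.
  have ep0 : 0 < ep by rewrite -ltcR -ee.
  have K0 : 0 < 4 * (2 * D + 1) by nra.
  have [N hN] := einv_small _ (divr_gt0 (mulr_gt0 ep0 ep0) K0).
  exists (m N); exists N => // n /= hn.
  rewrite ee; apply/ballE.
  have := cau N n; have := @einv_mono N n hn; have := hN N (leqnn N).
  rewrite ltr_pdivlMr //.
  have := rnorm_ge0 (m N - m n); have := einv_gt0 n.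
  move: (rnorm (m N - m n)) (einv N) (einv n) => d eN en *.
  nra.
have hcvg : cvg (m @ \oo) by apply: cauchy_cvg; apply: cauchy_exP.
set m0 := lim (m @ \oo) in hcvg.
have near_m0 e : 0 < e -> exists N, forall n, (N <= n)%N -> rnorm (m0 - m n) < e.
  move=> e0; have e0' : 0 < e%:C by rewrite ltcR.
  have [N _ hN] := (cvgrPdist_lt _ _).1 hcvg _ e0'.
  by exists N => n hn; have := hN n hn; rewrite normE ltcR.
have appr_m0 : appr M m0.
  move=> e e0; have [N hN] := near_m0 e e0; exists (m N); [exact: (hm N).1 | exact: hN].
have claimA w : appr M w -> D <= rnorm (p - w).
  move=> hw; rewrite leNgt; apply/negP => h.
  have d0 : 0 < D - rnorm (p - w) by rewrite subr_gt0.
  have [x Mx hx] := hw _ d0.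
  have := LB _ Mx; have := rnormD (p - w) (w - x); rewrite addrA subrK.
  lra.
set f := p - m0.
have claimB : rnorm f <= D.
  rewrite leNgt; apply/negP => h.
  have e0 : 0 < (rnorm f - D) / 2 by rewrite divr_gt0 // subr_gt0.
  have [N1 h1] := near_m0 _ e0; have [N2 h2] := einv_small _ e0.
  set n := maxn N1 N2.
  have := h1 n (leq_maxl _ _); have := h2 n (leq_maxr _ _); have := (hm n).2.
  have := rnormD (p - m n) (m n - m0); rewrite addrA subrK -/f [rnorm (m n - m0)]rnormB.
  lra.
have claimC u : (forall t : C, appr M (m0 + t *: u)) -> ip f u = 0.
  move=> hu; apply: variational => t.
  have h := claimA _ (hu t).
  have ef : p - (m0 + t *: u) = f - t *: u by rewrite opprD addrA.
  rewrite ef in h; exact: le_trans h.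
exists f; split.
  move=> i nij; apply: claimC => t.
  have hv : M (t *: psi i) by apply: spanZ; apply: span_psi.
  have := @appr_comb I psi _ 1 _ _ appr_m0 hv; by rewrite scale1r.
have hm0f : ip f m0 = 0.
  apply: claimC => t.
  have h0 : M 0 by apply: span0.
  have := @appr_comb I psi _ (1 + t) _ _ appr_m0 h0.
  by rewrite addr0 scalerDl scale1r.
have pf : p = f + m0 by rewrite /f subrK.
rewrite pf ipDl ip_rnorm (ip_conj_sym hip m0 f) hm0f rmorph0 addr0 => h0.
have : rnorm f ^+ 2 = 0 by apply: complexI; rewrite h0 rmorph0.
move/eqP; rewrite expf_eq0 /= => /eqP /rnorm_eq0 f0.
apply: hp; rewrite pf f0 add0r; exact: appr_m0.
Qed.

End Proj.
End S.

Theorem corollary6p16 (R : realType) (H : completeNormedModType (R[i]))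
    (ip : H -> H -> R[i]) (I : countType) (psi : I -> H) :
  is_inner_product ip ->
  separable H ->
  lower_frame_sequence ip psi ->
  exact_seq psi ->
  (exists! phi : I -> H, biorthogonal ip psi phi) /\ minimal_seq psi.
Proof.
move=> hip _ [A [A0 hA]] hex.
have hmin : minimal_seq psi.
  move=> j hj; apply: (hex j).
  apply/seteqP; split; last first.
    by apply: closureS => x; apply: spanS.
  move=> w /closure_appr hw; apply/closure_appr; apply: appr_trans => e e0.
  have [x hx hwx] := hw e e0; exists x => //.
  have [a [v [hv ->]]] := span_split _ _ _ _ j _ hx.
  by apply: appr_comb hv; apply/closure_appr.
have hbi j : exists g, forall i, ip (psi i) g = (i == j)%:R.
  have hp : ~ appr _ _ (span_of psi [set i | i <> j]) (psi j).
    by move=> /closure_appr; exact: (hmin j).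
  have [f [h1 h2]] := @proj _ _ _ hip _ _ _ hp.
  exists ((Num.conj (ip (psi j) f))^-1 *: f) => i.
  rewrite (ipZr _ _ _ hip); have [->|nij] := eqVneq i j.
    by rewrite fmorphV /= conjCK mulVf //; apply/eqP.
  rewrite (ip_conj_sym hip (psi i)) h1 ?rmorph0 ?mulr0 //.
  by move/eqP; rewrite (negbTE nij).
have [phi hphi] := choice hbi.
split; last exact: hmin.
exists phi; split; first by move=> i j; exact: hphi.
move=> phi' hphi'; apply: funext => j.
pose g := phi j - phi' j.
have hg i : ip g (psi i) = 0.
  by rewrite (ip_conj_sym hip) (ipBr _ _ _ hip) hphi hphi' subrr rmorph0.
have hs : (\esum_(i in [set: I]) (cabs2 (ip g (psi i)))%:E = 0)%E.
  apply: esum1 => i _; rewrite hg /cabs2 /=.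
  by rewrite expr0n addr0.
have := hA g; rewrite hs => /(_ (ltry 0)); rewrite lee_fin => h.
have hg0 : rnorm g = 0.
  apply/eqP; rewrite -sqrf_eq0 eq_le sqr_ge0 andbT.
  by rewrite -(pmulr_rle0 _ A0).
by apply/eqP; rewrite -subr_eq0; apply/eqP; apply: (rnorm_eq0 _ _ _ hg0).
Qed.
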